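(* Let $\Phi:I\to O$ be a quantum channel and let $(\mathcal{E},W)$ be a Stinespring module related to $\Phi$. Regard $\mathcal{E}$ as a Hilbert space with inner product $\mathrm{tr}(\langle\cdot,\cdot\rangle_{O^{op}})$, and define $\pi:O\to B(\mathcal{E})$ and $V:H_{in}\to\mathcal{E}$ by $\pi(x)(\xi)=\xi*x$ (right $O^{op}$-multiplication in $\mathcal{E}$) and $V(\eta)=W(\eta\otimes 1)$. Then $(\pi,V,\mathcal{E})$ is a Stinespring representation of the unital completely positive map $\Phi^*:O\to I$. Moreover, if $(\mathcal{E},W)$ is minimal, then this Stinespring representation is minimal.
   Context: All Hilbert spaces are finite dimensional; inner products are linear in the second variable. $H_{in}=\bigoplus_a H^a_{in}$, $H_{out}=\bigoplus_b H^b_{out}$, $I=\bigoplus_a B(H^a_{in})\subseteq B(H_{in})$, $O=\bigoplus_b B(H^b_{out})\subseteq B(H_{out})$, with traces inherited from $B(H_{in})$, $B(H_{out})$ and Hilbert–Schmidt inner products. A quantum channel is a trace-preserving completely positive map $\Phi:I\to O$; $\Phi^*:O\to I$ is its Hilbert–Schmidt adjoint (a unital completely positive map). $e^a_i$ is an orthonormal basis of $H^a_{in}$, $e^a_{ij}$ the matrix units, $\theta_{\xi,\eta}(\eta')=\langle\eta,\eta'\rangle\xi$. $O^{op}$ is the opposite algebra of $O$ (product $a*b=ba$), a C*-algebra, with the same trace as $O$. Hilbert $O^{op}$-modules are right modules with $O^{op}$-valued inner products; $\mathcal{L}(\mathcal{M},\mathcal{N})$ denotes adjointable module maps. $\mathcal{M}_\Phi=H_{in}\otimes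 O^{op}$ with $(\xi\otimes a)*x=\xi\otimes(a*x)$ and $\langle\xi\otimes a,\eta\otimes b\rangle_{O^{op}}=\langle\xi,\eta\rangle a^**b$. $C_\Phi\in\mathcal{L}(\mathcal{M}_\Phi)$ is the $O^{op}$-linear map with $C_\Phi(e^a_j\otimes1)=\sum_i e^a_i\otimes\Phi(e^a_{ji})$. A Stinespring module related to $\Phi$ is a pair $(\mathcal{E},W)$ with $\mathcal{E}$ a Hilbert $O^{op}$-module and $W\in\mathcal{L}(\mathcal{M}_\Phi,\mathcal{E})$ such that $W^*W=C_\Phi$; it is minimal if the range of $W$ is dense in $\mathcal{E}$. A Stinespring representation of $\Phi^*$ is a triple $(\pi,V,K)$ with $K$ a Hilbert space, $\pi:O\to B(K)$ a C*-algebra homomorphism and $V:H_{in}\to K$ an isometry such that $\Phi^*(x)=V^*\pi(x)V$ for all $x\in O$; it is minimal if $K=\overline{\mathrm{span}}\{\pi(T)V\xi: T\in O,\xi\in H_{in}\}$. *)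

(* Defs.v *)
From HB Require Import structures.
From mathcomp Require Import all_boot all_order all_algebra.
Set Implicit Arguments. Unset Strict Implicit. Unset Printing Implicit Defensive.
Import Order.TTheory GRing.Theory Num.Theory.
Local Open Scope ring_scope.

Section Defs.
Variable C : numClosedFieldType.

Definition cadj m n (A : 'M[C]_(m, n)) : 'M[C]_(n, m) := (map_mx Num.conj A)^T.

Definition psd n (A : 'M[C]_n) : Prop := exists B : 'M[C]_n, A = cadj B *m B.

(* Block algebra  \bigoplus_a B(H^a) inside B(C^n): the orthonormal basis
   vector e_i belongs to the summand with label [lab i]. *)
Definition in_blocks n (lab : 'I_n -> nat) (A : 'M[C]_n) : Prop :=
  forall i j, lab i <> lab j -> A i j = 0.

Definition quantum_channel N M (bin : 'I_N -> nat) (bout : 'I_M -> nat)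
  (Phi : 'M[C]_N -> 'M[C]_M) : Prop :=
  [/\ forall x, in_blocks bin x -> in_blocks bout (Phi x),
      forall (a : C) x y, in_blocks bin x -> in_blocks bin y ->
        Phi (a *: x + y) = a *: Phi x + Phi y,
      forall x, in_blocks bin x -> \tr (Phi x) = \tr x &
      forall (k : nat) (X : 'I_k -> 'I_k -> 'M[C]_N),
        (forall i j, in_blocks bin (X i j)) ->
        psd (\mxblock_(i < k, j < k) X i j) ->
        psd (\mxblock_(i < k, j < k) Phi (X i j))].

Definition hs_adjoint N M (bin : 'I_N -> nat) (bout : 'I_M -> nat)
  (Phi : 'M[C]_N -> 'M[C]_M) (Phis : 'M[C]_M -> 'M[C]_N) : Prop :=
  forall y, in_blocks bout y ->
    in_blocks bin (Phis y) /\
    forall x, in_blocks bin x -> \tr (cadj (Phis y) *m x) = \tr (cadj y *m Phi x).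

(* Hilbert O^op-module structure on a (finite dimensional) complex vector
   space E: right O^op action [act xi x] (= xi * x) and O^op-valued inner
   product [ip]. The O^op product is a * b = b *m a. *)
Definition hilbert_Oop_module M (bout : 'I_M -> nat) (E : vectType C)
  (act : E -> 'M[C]_M -> E) (ip : E -> E -> 'M[C]_M) : Prop :=
  [/\
      forall xi x y, in_blocks bout x -> in_blocks bout y ->
        act (act xi x) y = act xi (y *m x),
      forall xi eta x, in_blocks bout x -> act (xi + eta) x = act xi x + act eta x,
      forall xi x y, in_blocks bout x -> in_blocks bout y ->
        act xi (x + y) = act xi x + act xi y,
      forall (a : C) xi x, in_blocks bout x ->
        act (a *: xi) x = a *: act xi x /\ act xi (a *: x) = a *: act xi x &
      [/\ forall xi eta, in_blocks bout (ip xi eta),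
          forall (a : C) xi eta eta', ip xi (a *: eta + eta') = a *: ip xi eta + ip xi eta',
          forall xi eta x, in_blocks bout x -> ip xi (act eta x) = x *m ip xi eta,
          forall xi eta, ip eta xi = cadj (ip xi eta) &
          (forall xi, psd (ip xi xi)) /\ (forall xi, ip xi xi = 0 -> xi = 0)]].

(* The module M_Phi = H_in (x) O^op: an element mu represents
   \sum_i e_i (x) mu i, with all mu i in O. *)
Definition in_MPhi N M (bout : 'I_M -> nat) (mu : 'I_N -> 'M[C]_M) : Prop :=
  forall i, in_blocks bout (mu i).

(* <xi (x) a, eta (x) b> = <xi, eta> a^* * b  (O^op product) *)
Definition ip_MPhi N M (mu nu : 'I_N -> 'M[C]_M) : 'M[C]_M :=
  \sum_(i < N) nu i *m cadj (mu i).

(* C_Phi, the O^op-linear map with C_Phi(e_j (x) 1) = \sum_{i in block of j}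
   e_i (x) Phi(e_{ji}); extended O^op-linearly. *)
Definition C_Phi N M (bin : 'I_N -> nat) (Phi : 'M[C]_N -> 'M[C]_M)
  (mu : 'I_N -> 'M[C]_M) : 'I_N -> 'M[C]_M :=
  fun i => \sum_(j < N | bin j == bin i) mu j *m Phi (delta_mx j i).

(* Stinespring module (E, W) related to Phi: W in L(M_Phi, E) with W^* W = C_Phi. *)
Definition stinespring_module N M (bin : 'I_N -> nat) (bout : 'I_M -> nat)
  (Phi : 'M[C]_N -> 'M[C]_M) (E : vectType C) (act : E -> 'M[C]_M -> E)
  (ip : E -> E -> 'M[C]_M) (W : ('I_N -> 'M[C]_M) -> E) : Prop :=
  hilbert_Oop_module bout act ip /\
  exists Wadj : E -> ('I_N -> 'M[C]_M),
    [/\ forall xi, @in_MPhi N M bout (Wadj xi),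
        forall mu xi, @in_MPhi N M bout mu -> ip (W mu) xi = ip_MPhi mu (Wadj xi) &
        forall mu, @in_MPhi N M bout mu -> Wadj (W mu) = C_Phi bin Phi mu].

(* Minimality: range of W dense in E (E finite dimensional, so = E). *)
Definition stinespring_module_minimal N M (bout : 'I_M -> nat) (E : vectType C)
  (W : ('I_N -> 'M[C]_M) -> E) : Prop :=
  forall xi : E, exists mu, @in_MPhi N M bout mu /\ W mu = xi.

Definition inner_product (K : vectType C) (ipK : K -> K -> C) : Prop :=
  [/\ forall (a : C) x y z, ipK x (a *: y + z) = a * ipK x y + ipK x z,
      forall x y, ipK y x = Num.conj (ipK x y),
      forall x, 0 <= ipK x x &
      forall x, ipK x x = 0 -> x = 0].

Definition ip_col N (xi eta : 'cV[C]_N) : C := (cadj xi *m eta) 0 0.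

Definition stinespring_rep N M (bout : 'I_M -> nat) (Phis : 'M[C]_M -> 'M[C]_N)
  (K : vectType C) (ipK : K -> K -> C) (pi : 'M[C]_M -> K -> K)
  (V : 'cV[C]_N -> K) : Prop :=
  [/\ inner_product ipK,
      forall x, in_blocks bout x -> linear (pi x),
      [/\ forall (a : C) x y, in_blocks bout x -> in_blocks bout y ->
            pi (a *: x + y) =1 (fun k => a *: pi x k + pi y k),
          forall x y, in_blocks bout x -> in_blocks bout y ->
            pi (x *m y) =1 pi x \o pi y &
          forall x k k', in_blocks bout x -> ipK k (pi x k') = ipK (pi (cadj x) k) k'],
      linear V /\ (forall xi eta, ipK (V xi) (V eta) = ip_col xi eta) &
      forall x xi eta, in_blocks bout x ->
        ip_col xi (Phis x *m eta) = ipK (V xi) (pi x (V eta))].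

Definition stinespring_rep_minimal N M (bout : 'I_M -> nat)
  (K : vectType C) (pi : 'M[C]_M -> K -> K) (V : 'cV[C]_N -> K) : Prop :=
  forall k : K, exists s : seq ('M[C]_M * 'cV[C]_N),
    (forall p, p \in s -> in_blocks bout p.1) /\
    k = \sum_(p <- s) pi p.1 (V p.2).

End Defs.

(* Main.v *)
Require Import Defs.
From HB Require Import structures.
From mathcomp Require Import all_boot all_order all_algebra.
Import Order.TTheory GRing.Theory Num.Theory.
Local Open Scope ring_scope.
Set Implicit Arguments. Unset Strict Implicit.

Section Cadj.
Variable C : numClosedFieldType.

Lemma cadjE m n (A : 'M[C]_(m, n)) i j : cadj A i j = (A j i)^*.
Proof. by rewrite /cadj !mxE. Qed.

Lemma cadjK m n (A : 'M[C]_(m, n)) : cadj (cadj A) = A.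
Proof. by apply/matrixP => i j; rewrite !cadjE conjCK. Qed.

Lemma cadjM m n p (A : 'M[C]_(m, n)) (B : 'M[C]_(n, p)) :
  cadj (A *m B) = cadj B *m cadj A.
Proof.
apply/matrixP => i j; rewrite cadjE !mxE rmorph_sum; apply: eq_bigr => k _.
by rewrite !cadjE rmorphM mulrC.
Qed.

Lemma cadjD m n (A B : 'M[C]_(m, n)) : cadj (A + B) = cadj A + cadj B.
Proof. by apply/matrixP => i j; rewrite !cadjE !mxE rmorphD. Qed.

Lemma cadjZ m n a (A : 'M[C]_(m, n)) : cadj (a *: A) = a^* *: cadj A.
Proof. by apply/matrixP => i j; rewrite !cadjE !mxE rmorphM. Qed.

Lemma cadj0 m n : cadj (0 : 'M[C]_(m, n)) = 0.
Proof. by apply/matrixP => i j; rewrite !cadjE !mxE rmorph0. Qed.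

Lemma cadj_sum m n (I : Type) (r : seq I) (P : pred I) (F : I -> 'M[C]_(m, n)) :
  cadj (\sum_(i <- r | P i) F i) = \sum_(i <- r | P i) cadj (F i).
Proof. exact: (big_morph _ (@cadjD m n) (@cadj0 m n)). Qed.

Lemma cadj_scalar n (a : C) : cadj (a%:M : 'M_n) = a^*%:M.
Proof. by apply/matrixP => i j; rewrite cadjE !mxE eq_sym; case: eqP; rewrite ?rmorph0 ?mulr1n ?mulr0n. Qed.

Lemma tr_cadj n (A : 'M[C]_n) : \tr (cadj A) = (\tr A)^*.
Proof. by rewrite /mxtrace rmorph_sum; apply: eq_bigr => i _; rewrite cadjE. Qed.

Lemma in_blocks_cadj n lab (A : 'M[C]_n) : in_blocks lab A -> in_blocks lab (cadj A).
Proof. by move=> h i j hij; rewrite cadjE h ?rmorph0 //; apply: nesym. Qed.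

Lemma in_blocksD n lab (A B : 'M[C]_n) : in_blocks lab A -> in_blocks lab B -> in_blocks lab (A + B).
Proof. by move=> h1 h2 i j hij; rewrite mxE h1 // h2 // addr0. Qed.

Lemma in_blocksZ n lab a (A : 'M[C]_n) : in_blocks lab A -> in_blocks lab (a *: A).
Proof. by move=> h1 i j hij; rewrite mxE h1 // mulr0. Qed.

Lemma in_blocks_scalar n lab (a : C) : in_blocks lab (a%:M : 'M_n).
Proof. by move=> i j hij; rewrite mxE; case: eqP => // e; rewrite e in hij. Qed.

Lemma in_blocks_delta n (lab : 'I_n -> nat) i j : lab i = lab j -> in_blocks lab (delta_mx i j : 'M[C]_n).
Proof.
move=> e k l hkl; rewrite mxE; case: eqP => [ek|]; case: eqP => [el|] //=.
by case: hkl; rewrite ek el.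
Qed.

Lemma tr_mul_delta n (B : 'M[C]_n) i j : \tr (B *m delta_mx j i) = B i j.
Proof.
rewrite /mxtrace (bigD1 i) //= big1 => [|k hk].
  rewrite addr0 mxE (bigD1 j) //= big1 => [|l hl]; first by rewrite !mxE !eqxx mulr1 addr0.
  by rewrite mxE (negPf hl) mulr0.
rewrite mxE big1 // => l _; rewrite mxE (negPf hk) andbF mulr0 //.
Qed.

Lemma tr_delta n (i j : 'I_n) : \tr (delta_mx j i : 'M[C]_n) = (j == i)%:R.
Proof. by rewrite -[delta_mx j i]mul1mx tr_mul_delta mxE eq_sym. Qed.

Lemma psd_tr n (A : 'M[C]_n) : psd A -> 0 <= \tr A /\ (\tr A = 0 -> A = 0).
Proof.
case=> B ->.
have e : \tr (cadj B *m B) = \sum_i \sum_k `|B k i| ^+ 2.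
  by apply: eq_bigr => i _; rewrite mxE; apply: eq_bigr => k _; rewrite cadjE normCKC.
rewrite e; split; first by apply: sumr_ge0 => i _; apply: sumr_ge0 => k _; apply: exprn_ge0.
move=> h; have hB : B = 0.
  apply/matrixP => k i; rewrite mxE.
  have h1 := psumr_eq0P (fun i _ => sumr_ge0 _ (fun k _ => exprn_ge0 2 (normr_ge0 (B k i)))) h (i:=i) isT.
  have h2 := psumr_eq0P (fun k _ => exprn_ge0 2 (normr_ge0 (B k i))) h1 (i:=k) isT.
  by move/eqP: h2; rewrite expf_eq0 /= normr_eq0 => /eqP.
by rewrite hB mulmx0.
Qed.
End Cadj.

Section Module.
Variables (C : numClosedFieldType) (M : nat) (bout : 'I_M -> nat) (E : vectType C)
  (act : E -> 'M[C]_M -> E) (ip : E -> E -> 'M[C]_M).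
Hypothesis HM : hilbert_Oop_module bout act ip.

Lemma ipDr xi u v : ip xi (u + v) = ip xi u + ip xi v.
Proof. case: HM => _ _ _ _ [_ h _ _ _]. have := h 1 xi u v. by rewrite !scale1r. Qed.

Lemma ip0r xi : ip xi 0 = 0.
Proof. have := ipDr xi 0 0; rewrite addr0 => h; apply: (addrI (ip xi 0)); by rewrite addr0 -h. Qed.

Lemma ipZr xi a u : ip xi (a *: u) = a *: ip xi u.
Proof. by case: HM => _ _ _ _ [_ h _ _ _]; rewrite -[a *: u]addr0 h ip0r addr0. Qed.

Lemma ipC xi eta : ip eta xi = cadj (ip xi eta).
Proof. by case: HM => _ _ _ _ [_ _ _ h _]. Qed.

Lemma ipDl xi u v : ip (u + v) xi = ip u xi + ip v xi.
Proof. by rewrite ipC ipDr cadjD -!ipC. Qed.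

Lemma ip0l xi : ip 0 xi = 0.
Proof. by rewrite ipC ip0r cadj0. Qed.

Lemma ipZl xi a u : ip (a *: u) xi = a^* *: ip u xi.
Proof. by rewrite ipC ipZr cadjZ -ipC. Qed.

Lemma ipNl xi u : ip (- u) xi = - ip u xi.
Proof. by rewrite -scaleN1r ipZl rmorphN1 scaleN1r. Qed.

Lemma ip_suml xi (I : Type) (r : seq I) (P : pred I) (F : I -> E) :
  ip (\sum_(i <- r | P i) F i) xi = \sum_(i <- r | P i) ip (F i) xi.
Proof. exact: (big_morph (fun u => ip u xi) (ipDl xi) (ip0l xi)). Qed.

Lemma ip_actr xi eta x : in_blocks bout x -> ip xi (act eta x) = x *m ip xi eta.
Proof. by case: HM => _ _ _ _ [_ _ h _ _]; apply: h. Qed.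

Lemma ip_actl xi eta x : in_blocks bout x -> ip (act eta x) xi = ip eta xi *m cadj x.
Proof. by move=> hx; rewrite ipC ip_actr // cadjM -ipC. Qed.

Lemma ip_nondeg d : (forall xi, ip d xi = 0) -> d = 0.
Proof. by case: HM => _ _ _ _ [_ _ _ _ [_ h]] H; apply: h; apply: H. Qed.

Lemma ip_eq u v : (forall xi, ip u xi = ip v xi) -> u = v.
Proof.
move=> h; apply/eqP; rewrite -subr_eq0; apply/eqP; apply: ip_nondeg => xi.
by rewrite ipDl ipNl h subrr.
Qed.

End Module.

Section Stine.
Variables (C : numClosedFieldType) (N M : nat)
  (bin : 'I_N -> nat) (bout : 'I_M -> nat)
  (Phi : 'M[C]_N -> 'M[C]_M)
  (E : vectType C) (act : E -> 'M[C]_M -> E) (ip : E -> E -> 'M[C]_M)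
  (W : ('I_N -> 'M[C]_M) -> E) (Wadj : E -> ('I_N -> 'M[C]_M)).
Hypothesis HM : hilbert_Oop_module bout act ip.
Hypothesis HW2 : forall mu xi, @in_MPhi C N M bout mu -> ip (W mu) xi = ip_MPhi mu (Wadj xi).
Hypothesis HW3 : forall mu, @in_MPhi C N M bout mu -> Wadj (W mu) = C_Phi bin Phi mu.

Lemma W_lin a mu nu rho : in_MPhi bout mu -> in_MPhi bout nu -> in_MPhi bout rho ->
  (forall i, rho i = a *: mu i + nu i) -> W rho = a *: W mu + W nu.
Proof.
move=> hmu hnu hrho e; apply: (ip_eq HM) => xi.
rewrite (ipDl HM) (ipZl HM) !HW2 // /ip_MPhi scaler_sumr -big_split /=.
by apply: eq_bigr => i _; rewrite e cadjD cadjZ mulmxDr -scalemxAr.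
Qed.

Lemma W_ext mu rho : in_MPhi bout mu -> in_MPhi bout rho ->
  (forall i, rho i = mu i) -> W rho = W mu.
Proof.
move=> hmu hrho e; rewrite (@W_lin 0 mu mu rho) // ?scale0r ?add0r // => i.
by rewrite e scale0r add0r.
Qed.

Definition ev (eta : 'cV[C]_N) : 'I_N -> 'M[C]_M := fun i => eta i 0 *: 1%:M.

Lemma ev_in eta : in_MPhi bout (ev eta).
Proof. by move=> i; apply: in_blocksZ; apply: in_blocks_scalar. Qed.

Lemma ipV xi eta : ip (W (ev xi)) (W (ev eta)) =
  \sum_i \sum_(j | bin j == bin i) (eta j 0 * (xi i 0)^*) *: Phi (delta_mx j i).
Proof.
rewrite HW2; last exact: ev_in. rewrite HW3; last exact: ev_in. rewrite /ip_MPhi /C_Phi; apply: eq_bigr => i _.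
rewrite mulmx_suml; apply: eq_bigr => j _.
by rewrite /ev !scalemx1 cadj_scalar mul_mx_scalar mul_scalar_mx scalerA mulrC.
Qed.

Lemma ipVe i xi : ip (W (ev (delta_mx i 0))) xi = Wadj xi i.
Proof.
rewrite HW2; last exact: ev_in. rewrite /ip_MPhi (bigD1 i) //= big1 => [|l hl].
  by rewrite /ev mxE !eqxx scalemx1 cadj_scalar mulr1n rmorph1 mulmx1 addr0.
by rewrite /ev mxE (negPf hl) scalemx1 cadj_scalar mulr0n rmorph0 mul_mx_scalar scale0r.
Qed.

Lemma W_decomp mu : in_MPhi bout mu ->
  W mu = \sum_i act (W (ev (delta_mx i 0))) (mu i).
Proof.
move=> hmu; apply: (ip_eq HM) => xi; rewrite HW2 //; rewrite (ip_suml HM) /ip_MPhi.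
by apply: eq_bigr => i _; rewrite (ip_actl HM) // ipVe.
Qed.

End Stine.

Lemma tr_sum (C : numClosedFieldType) n (I : Type) (r : seq I) (P : pred I) (F : I -> 'M[C]_n) :
  \tr (\sum_(i <- r | P i) F i) = \sum_(i <- r | P i) \tr (F i).
Proof. exact: (big_morph _ (@mxtraceD _ n) (@mxtrace0 _ n)). Qed.

Lemma tr_mul_cadj (C : numClosedFieldType) n (A B : 'M[C]_n) :
  \tr (A *m cadj B) = (\tr (cadj A *m B))^*.
Proof. by rewrite -tr_cadj cadjM cadjK mxtrace_mulC. Qed.

Unset Implicit Arguments.

Theorem proposition3p10 (C : numClosedFieldType) (N M : nat)
  (bin : 'I_N -> nat) (bout : 'I_M -> nat)
  (Phi : 'M[C]_N -> 'M[C]_M) (Phis : 'M[C]_M -> 'M[C]_N)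
  (E : vectType C) (act : E -> 'M[C]_M -> E) (ip : E -> E -> 'M[C]_M)
  (W : ('I_N -> 'M[C]_M) -> E) :
  quantum_channel bin bout Phi ->
  hs_adjoint bin bout Phi Phis ->
  stinespring_module bin bout Phi act ip W ->
  let pi := fun (x : 'M[C]_M) (xi : E) => act xi x in
  let V := fun eta : 'cV[C]_N => W (fun i => eta i 0 *: (1%:M : 'M[C]_M)) in
  stinespring_rep bout Phis (fun xi eta => \tr (ip xi eta)) pi V /\
  (stinespring_module_minimal bout W -> stinespring_rep_minimal bout pi V).
Proof.
move=> HQ Hadj [HM [Wadj [HW1 HW2 HW3]]] pi V.
case: HQ => _ _ Htp _.
have HM' := HM. case: HM' => hA hD hDx hZ [_ _ _ _ [hpsd hdef]].
split.
  split.
  - split.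
    + by move=> a x y z; rewrite (ipDr HM) (ipZr HM) mxtraceD mxtraceZ.
    + by move=> x y /=; rewrite (ipC HM x y) tr_cadj.
    + by move=> x; have [h _] := psd_tr (hpsd x).
    + by move=> x h0; apply: hdef; have [_ h] := psd_tr (hpsd x); exact: h h0.
  - by move=> x hx a u v; rewrite /pi hD ?(hZ a u x hx).1.
  - split.
    + move=> a x y hx hy k; rewrite /pi /= hDx ?in_blocksZ //; last exact: in_blocksZ.
      by rewrite (hZ a k x hx).2.
    + by move=> x y hx hy k; rewrite /pi /= hA.
    + move=> x k k' hx; rewrite /pi (ip_actr HM) // (ip_actl HM); last exact: in_blocks_cadj.
      by rewrite cadjK mxtrace_mulC.
  - split.
    + move=> a u v; rewrite /V.
      apply: (W_lin HM HW2); try exact: ev_in.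
      by move=> i; rewrite /ev !mxE scalerDl scalerA.
    + move=> xi eta; rewrite /V.
      have := ipV HW2 HW3 xi eta; rewrite /ev => ->.
      rewrite tr_sum /ip_col mxE; apply: eq_bigr => i _.
      rewrite tr_sum (bigD1 i) //= big1 => [|j /andP [hj hji]].
        rewrite mxtraceZ Htp; last exact: in_blocks_delta.
        by rewrite tr_delta eqxx mulr1 addr0 cadjE mulrC.
      rewrite mxtraceZ Htp; last exact: in_blocks_delta (eqP hj).
      by rewrite tr_delta (negPf hji) mulr0.
  - move=> x xi eta hx; rewrite /pi /V (ip_actr HM) //.
    have := ipV HW2 HW3 eta xi; rewrite /ev => hV.
    rewrite (ipC HM) hV.
    have [hb' hPh] := Hadj x hx.
    have step : forall i, \tr (x *m cadj (\sum_(j | bin j == bin i)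
        (xi j 0 * (eta i 0)^*) *: Phi (delta_mx j i))) =
        \sum_j (xi j 0)^* * eta i 0 * Phis x j i.
      move=> i; rewrite cadj_sum mulmx_sumr tr_sum big_mkcond /=; apply: eq_bigr => j _.
      case: (boolP (bin j == bin i)) => hb.
        rewrite cadjZ -scalemxAr mxtraceZ tr_mul_cadj.
        rewrite -(hPh _ (@in_blocks_delta C _ _ _ _ (eqP hb))) tr_mul_delta cadjE conjCK.
        by rewrite rmorphM /= conjCK.
      by rewrite hb' ?mulr0 //; apply/eqP.
    rewrite cadj_sum mulmx_sumr tr_sum (eq_bigr _ (fun i _ => step i)) exchange_big /=.
    rewrite /ip_col mxE; apply: eq_bigr => j _; rewrite cadjE mxE mulr_sumr.
    by apply: eq_bigr => i _; rewrite [Phis x j i * _]mulrC mulrA.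
move=> Hmin k; have [mu [hmu <-]] := Hmin k.
exists [seq (mu i, delta_mx i 0) | i <- index_enum 'I_N]; split.
  by move=> p /mapP [i _ ->] /=; exact: hmu.
by rewrite big_map (W_decomp HM HW2 hmu).
Qed.
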